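(* Let $(Q,F)$ be a finite ice quiver with $Q_0=\{1,\dots,m\}$ and $F_0=\{n+1,\dots,m\}$ ($1\le n\le m$), with Euler matrix $\widehat B$, and assume $\det\widehat B\neq0$. Let $\widetilde B$ be the $m\times n$ matrix formed by the first $n$ columns of $\widehat B$ and $\Lambda=|\det\widehat B|\cdot(\widehat B^{-T}-\widehat B^{-1})$. Then $(\widetilde B,\Lambda)$ is a compatible pair, and its type is $2|\det\widehat B|\cdot I_n$.
   Context: An ice quiver $(Q,F)$ is a quiver $Q$ with a subquiver $F$ (frozen vertices and arrows). The Euler matrix $\widehat B=(b_{ij})_{1\le i,j\le m}$ is defined by $b_{ii}=0$ for $1\le i\le n$, $b_{ii}=1$ for $i>n$, and for $i\neq j$, $b_{ij}=\#\{\text{unfrozen arrows } i\to j\}-\#\{\text{arrows } j\to i\}$. A pair $(\widetilde B,\Lambda)$ of an integer $m\times n$ matrix and a skew-symmetric integer $m\times m$ matrix is compatible if $\widetilde B^T\Lambda=(S\mid\mathbf 0)$ where $S$ is an $n\times n$ diagonal matrix with strictly positive integer diagonal entries and $\mathbf 0$ is the $n\times(m-n)$ zero matrix; $S$ is called the type. *)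

(* Defs.v *)
From HB Require Import structures.
From mathcomp Require Import all_boot all_order all_algebra.
Set Implicit Arguments. Unset Strict Implicit. Unset Printing Implicit Defensive.
Import Order.TTheory GRing.Theory Num.Theory.
Local Open Scope ring_scope.

(* A finite ice quiver with vertex set 'I_(n + k) (paper: {1,...,m}, m = n+k);
   the frozen vertices are those i with n <= i (paper: {n+1,...,m}). *)
Record ice_quiver (n k : nat) := IceQuiver {
  arrow : finType;
  src : arrow -> 'I_(n + k);
  tgt : arrow -> 'I_(n + k);
  frozen_arrow : pred arrow;
  frozen_arrowP : forall a, frozen_arrow a -> (n <= src a)%N /\ (n <= tgt a)%N
}.
Arguments src {n k} i _ : rename.
Arguments tgt {n k} i _ : rename.
Arguments frozen_arrow {n k} i _ : rename.

Definition euler_matrix n k (Q : ice_quiver n k) : 'M[int]_(n + k) :=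
  \matrix_(i, j)
    if i == j then (if (i < n)%N then 0 else 1)
    else (#|[set a | ~~ frozen_arrow Q a & (src Q a == i) && (tgt Q a == j)]|%:Z
          - #|[set a | (src Q a == j) && (tgt Q a == i)]|%:Z).

Definition exchange_matrix n k (Q : ice_quiver n k) : 'M[int]_(n + k, n) :=
  lsubmx (euler_matrix Q).

Definition lambda_of n k (Q : ice_quiver n k) : 'M[rat]_(n + k) :=
  let Bq := map_mx (fun z : int => z%:~R : rat) (euler_matrix Q) in
  (`|\det (euler_matrix Q)|%:~R : rat) *: ((invmx Bq)^T - invmx Bq).

Definition skew_symmetric m (L : 'M[int]_m) := L^T = - L.

Definition compatible_of_type n k (Bt : 'M[int]_(n + k, n))
    (L : 'M[int]_(n + k)) (S : 'M[int]_n) :=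
  [/\ skew_symmetric L,
      is_diag_mx S,
      (forall i, 0 < S i i) &
      Bt^T *m L = row_mx S (0 : 'M[int]_(n, k))].

(* Main.v *)
Require Import Defs.
From mathcomp Require Import all_boot all_order all_algebra.
From mathcomp Require Import ring.
Import Order.TTheory GRing.Theory Num.Theory.
Local Open Scope ring_scope.

Lemma C_zero n k (Q : ice_quiver n k) (i : 'I_n) (l : 'I_(n + k)) :
  let B := euler_matrix Q in (B + B^T) (lshift k i) l = 0.
Proof.
rewrite /= !mxE eq_sym.
have hi : (lshift k i < n)%N by rewrite /= ltn_ord.
case: eqP => [->|_]; first by rewrite hi.
set s1 := #|[set a | ~~ frozen_arrow Q a & _]|.
set s2 := #|[set a | ~~ frozen_arrow Q a & _]|.
set t1 := #|[set a | _ && _]|.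
set t2 := #|[set a | _ && _]|.
have -> : s1 = t2.
  rewrite /s1 /t2; apply: eq_card => a; rewrite !inE.
  case: (boolP (frozen_arrow Q a)) => //= /(frozen_arrowP) [hs _].
  case: eqP => // e; move: hs; rewrite e /= leqNgt ltn_ord //.
have -> : s2 = t1.
  rewrite /s2 /t1; apply: eq_card => a; rewrite !inE.
  case: (boolP (frozen_arrow Q a)) => //= /(frozen_arrowP) [_ ht].
  case: (src Q a == l) => //=; case: eqP => // e; move: ht; rewrite e /= leqNgt ltn_ord //.
by rewrite addrC addrA subrK subrr.
Qed.

Theorem proposition4p1 (n k : nat) (Q : ice_quiver n k) :
  (1 <= n)%N ->
  \det (euler_matrix Q) != 0 ->
  exists L : 'M[int]_(n + k),
    map_mx (fun z : int => z%:~R : rat) L = lambda_of Q /\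
    compatible_of_type (exchange_matrix Q) L
      ((2 * `|\det (euler_matrix Q)|)%:M).
Proof.
move=> _ hd.
set B := euler_matrix Q.
set d := \det B.
set s := Num.sg d.
exists (s *: ((\adj B)^T - \adj B)); split.
  rewrite /lambda_of -/B.
  set Bq := map_mx _ B.
  have hdq : \det Bq = d%:~R by rewrite /Bq (det_map_mx (GRing.RMorphism.clone _ _ (intr : int -> rat) _)).
  have hu : Bq \in unitmx by rewrite unitmxE hdq unitfE intr_eq0.
  have ha : \adj Bq = map_mx (fun z : int => z%:~R : rat) (\adj B)
    by rewrite /Bq (map_mx_adj (GRing.RMorphism.clone _ _ (intr : int -> rat) _)).
  rewrite /invmx hu hdq ha -/d.
  apply/matrixP => i j; rewrite !mxE.
  have hdq0 : (d%:~R : rat) != 0 by rewrite intr_eq0.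
  rewrite normrEsg -/s rmorphM /= rmorphB /=.

  field; done.
split.
- rewrite /skew_symmetric linearZ /= linearB /= trmxK.
  by rewrite -scalerN opprB.
- exact: scalar_mx_is_diag.
- move=> i; rewrite mxE eqxx mulr1n.
  by rewrite mulr_gt0 // normr_gt0.
have key : B^T *m (s *: ((\adj B)^T - \adj B)) =
   (2 * `|d|)%:M - s *: ((B + B^T) *m \adj B).
  have h1 : B^T *m (\adj B)^T = d%:M by rewrite -trmx_mul mul_adj_mx tr_scalar_mx.
  have h2 : B^T *m \adj B = (B + B^T) *m \adj B - d%:M.
    by rewrite mulmxDl mul_mx_adj -/d [d%:M + _]addrC addrK.
  rewrite -scalemxAr mulmxBr h1 h2 opprB addrA scalerBr; congr (_ - _).
  rewrite -raddfD /= scale_scalar_mx; congr (_%:M).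
  rewrite normrEsg -/s; ring.
rewrite /exchange_matrix -/B trmx_lsub mul_usub_mx key.
apply/matrixP => i j; rewrite !mxE.
rewrite big1 ?mulr0 ?subr0; last first.
  by move=> l _; rewrite (@C_zero _ _ Q i l) mul0r.
case: splitP => j' hj; rewrite !mxE.
  by rewrite -!val_eqE /= hj.
rewrite -val_eqE /= hj.
have -> : (i == n + j' :> nat) = false.
  by apply/negbTE; rewrite neq_ltn (leq_trans (ltn_ord i)) ?leq_addr.
by [].
Qed.
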